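(* Let $1\le k<n$. The map $f_k(S)=(\lambda^{(1)}_i+\lambda^{(2)}_i)_{1\le i\le k}$ restricts to an injection $\Theta(k,2n+1)\to P(n-k,n)$.
   Context: Root system $B_n$: positive roots $e_a\pm e_b$ ($a<b$), $e_a$; simple roots $e_i-e_{i+1}$ ($i<n$), $e_n$; order $\alpha\le\beta$ iff $\beta-\alpha$ is a nonnegative integer combination of simple roots. Base region: roots $e_a\pm e_b$ ($a\le k<b$) and $e_a$ ($a\le k$), with $i$-th row ($1\le i\le k$) consisting of $e_{k+1-i}\pm e_b$ ($b>k$) and $e_{k+1-i}$. Top region: roots $e_a+e_b$ with $a<b\le k$. For $S$ a set of roots, $\lambda^{(1)}_i$ is the number of roots of $S$ in the $i$-th base row and $\lambda^{(2)}_i$ the number of roots of $S$ of the form $e_a+e_{k+1-i}$, $a<k+1-i$. $S$ (contained in the union of the two regions) is a $W^{OG(k,2n+1)}$-diagram if it meets each region in a lower order ideal of that region and, for each top-region root $e_a+e_b$, $e_a+e_b\in S$ whenever $S$ contains more than $2n+1-2k$ roots of the base rows indexed by $a$ and $b$ (rows $k+1-a$ and $k+1-b$) combined, and $e_a+e_b\notin S$ whenever it contains fewer than $2n+1-2k$ of them. $\Theta(k,2n+1)$ is the set of such diagrams. $P(n-k,n)$ is the set of partitions $\gamma=(\gamma_1\ge\dots\ge\gamma_k\ge0)$ with $\gamma_1\le 2n-k$ and $\gamma_i>\gamma_{i+1}$ whenever $\gamma_i>n-k$. *)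

(* Defs.v *)
From mathcomp Require Import all_boot all_order all_algebra.
Set Implicit Arguments. Unset Strict Implicit. Unset Printing Implicit Defensive.
Import GRing.Theory Num.Theory.

(* Roots of B_n (1-based indices a, b in {1..n}):
   inl (inl (a,b)) encodes e_a + e_b,
   inl (inr (a,b)) encodes e_a - e_b,
   inr a          encodes e_a.
   Only roots in the base / top regions are ever used (canonical encodings). *)
Definition broot (n : nat) : finType :=
  (('I_n.+1 * 'I_n.+1) + ('I_n.+1 * 'I_n.+1) + 'I_n.+1)%type.

Definition rplus n (a b : 'I_n.+1) : broot n := inl (inl (a, b)).
Definition rminus n (a b : 'I_n.+1) : broot n := inl (inr (a, b)).
Definition rshort n (a : 'I_n.+1) : broot n := inr a.

Definition rvec n (r : broot n) (j : nat) : int :=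
  match r with
  | inl (inl (a, b)) => (Posz (j == a) + Posz (j == b))%R
  | inl (inr (a, b)) => (Posz (j == a) - Posz (j == b))%R
  | inr a => Posz (j == a)
  end.

(* alpha <= beta iff beta - alpha = sum_i c_i alpha_i with c_i in N, where
   alpha_i = e_i - e_{i+1} (i<n), alpha_n = e_n.  The coefficient of e_j in
   sum_i c_i alpha_i is c_j - c_{j-1} (with c_0 = 0). *)
Definition rle n (alpha beta : broot n) : Prop :=
  exists c : nat -> nat, c 0 = 0%N /\
    forall j : nat, (0 < j <= n)%N ->
      (rvec beta j - rvec alpha j = Posz (c j) - Posz (c j.-1))%R.

Definition base_region n k (r : broot n) : bool :=
  match r with
  | inl (inl (a, b)) => (1 <= a <= k)%N && (k < b)%N
  | inl (inr (a, b)) => (1 <= a <= k)%N && (k < b)%N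
  | inr a => (1 <= a <= k)%N
  end.

Definition top_region n k (r : broot n) : bool :=
  match r with
  | inl (inl (a, b)) => (1 <= a)%N && (a < b)%N && (b <= k)%N
  | _ => false
  end.

Definition base_row n k (i : nat) (r : broot n) : bool :=
  match r with
  | inl (inl (a, b)) => (a == k.+1 - i :> nat) && (k < b)%N
  | inl (inr (a, b)) => (a == k.+1 - i :> nat) && (k < b)%N
  | inr a => (a == k.+1 - i :> nat)
  end.

Definition top_col n k (i : nat) (r : broot n) : bool :=
  match r with
  | inl (inl (a, b)) => (1 <= a)%N && (b == k.+1 - i :> nat) && (a < k.+1 - i)%N
  | _ => false
  end.

Definition lambda1 n k (S : {set broot n}) (i : nat) : nat :=
  #|[set r in S | base_row k i r]|.
Definition lambda2 n k (S : {set broot n}) (i : nat) : nat :=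
  #|[set r in S | top_col k i r]|.

Definition lower_ideal_in n (R : pred (broot n)) (S : {set broot n}) : Prop :=
  forall alpha beta : broot n, R alpha -> R beta -> beta \in S ->
    rle alpha beta -> alpha \in S.

Definition is_OG_diagram n k (S : {set broot n}) : Prop :=
  [/\ (forall r, r \in S -> base_region k r || top_region k r),
      lower_ideal_in (base_region k) S,
      lower_ideal_in (top_region k) S &
      forall a b : 'I_n.+1, (1 <= a)%N -> (a < b)%N -> (b <= k)%N ->
        let m := (lambda1 k S (k.+1 - a) + lambda1 k S (k.+1 - b))%N in
        ((2 * n + 1 - 2 * k < m)%N -> rplus a b \in S) /\
        ((m < 2 * n + 1 - 2 * k)%N -> rplus a b \notin S)].

Definition fk n k (S : {set broot n}) : seq nat :=
  [seq (lambda1 k S i + lambda2 k S i)%N | i <- iota 1 k].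

(* P(n-k, n): gamma = (gamma_1 >= ... >= gamma_k >= 0), gamma_1 <= 2n-k,
   gamma_i > gamma_{i+1} whenever gamma_i > n-k.  (0-based seq indices.) *)
Definition in_P n k (g : seq nat) : Prop :=
  [/\ size g = k,
      sorted geq g,
      (nth 0 g 0 <= 2 * n - k)%N &
      forall i : nat, (i.+1 < k)%N -> (n - k < nth 0 g i)%N ->
        (nth 0 g i.+1 < nth 0 g i)%N].

(* Main.v *)
Require Import Defs.
From mathcomp Require Import all_boot all_order all_algebra zify ring.
Import GRing.Theory Num.Theory.

Lemma rle_step n (alpha beta : broot n) x : 0 < x <= n ->
  (forall j, 0 < j <= n ->
     (rvec beta j - rvec alpha j = Posz (j == x) - Posz (j == x.+1))%R) ->
  rle alpha beta.
Proof.
move=> hx h; exists (fun j => nat_of_bool (j == x)); split.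
  by have /negbTE -> : 0 != x by lia.
move=> [|j] hj //; rewrite h //=.
Qed.

Lemma rvec_plus n (x y : nat) j : x <= n -> y <= n ->
  rvec (rplus (inord x) (inord y) : broot n) j = (Posz (j == x) + Posz (j == y))%R.
Proof. by move=> hx hy; rewrite /rvec /rplus !inordK. Qed.
Lemma rvec_minus n (x y : nat) j : x <= n -> y <= n ->
  rvec (rminus (inord x) (inord y) : broot n) j = (Posz (j == x) - Posz (j == y))%R.
Proof. by move=> hx hy; rewrite /rvec /rminus !inordK. Qed.
Lemma rvec_short n (x : nat) j : x <= n ->
  rvec (rshort (inord x) : broot n) j = Posz (j == x).
Proof. by move=> hx; rewrite /rvec /rshort !inordK. Qed.

Lemma rle_plus_a n x x' y : 0 < x -> x' = x.+1 -> x' <= n -> y <= n ->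
  rle (rplus (inord x') (inord y) : broot n) (rplus (inord x) (inord y)).
Proof.
move=> h0 -> hx hy; apply: (@rle_step _ _ _ x); first lia.
move=> j hj; rewrite !rvec_plus; (try lia); try ring.
Qed.

Lemma rle_plus_b n x y y' : 0 < y -> y' = y.+1 -> x <= n -> y' <= n ->
  rle (rplus (inord x) (inord y') : broot n) (rplus (inord x) (inord y)).
Proof.
move=> h0 -> hx hy; apply: (@rle_step _ _ _ y); first lia.
move=> j hj; rewrite !rvec_plus; (try lia); try ring.
Qed.

Lemma rle_minus_b n x y y' : 0 < y -> y' = y.+1 -> x <= n -> y' <= n ->
  rle (rminus (inord x) (inord y) : broot n) (rminus (inord x) (inord y')).
Proof.
move=> h0 -> hx hy; apply: (@rle_step _ _ _ y); first lia.
move=> j hj; rewrite !rvec_minus; (try lia); try ring.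
Qed.

Lemma rle_minus_a n x x' y : 0 < x -> x' = x.+1 -> x' <= n -> y <= n ->
  rle (rminus (inord x') (inord y) : broot n) (rminus (inord x) (inord y)).
Proof.
move=> h0 -> hx hy; apply: (@rle_step _ _ _ x); first lia.
move=> j hj; rewrite !rvec_minus; (try lia); try ring.
Qed.

Lemma rle_short_a n x x' : 0 < x -> x' = x.+1 -> x' <= n ->
  rle (rshort (inord x') : broot n) (rshort (inord x)).
Proof.
move=> h0 -> hx; apply: (@rle_step _ _ _ x); first lia.
move=> j hj; rewrite !rvec_short; (try lia); try ring.
Qed.

Lemma rle_minus_short n x y : y = n -> x <= n -> 0 < n ->
  rle (rminus (inord x) (inord y) : broot n) (rshort (inord x)).
Proof.
move=> -> hx hn; apply: (@rle_step _ _ _ n); first lia.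
move=> j hj; rewrite rvec_minus // rvec_short //.
have -> : (j == n.+1) = false by apply/negbTE; lia.
rewrite /=. ring.
Qed.

Lemma rle_short_plus n x y : y = n -> x <= n -> 0 < n ->
  rle (rshort (inord x) : broot n) (rplus (inord x) (inord y)).
Proof.
move=> -> hx hn; apply: (@rle_step _ _ _ n); first lia.
move=> j hj; rewrite rvec_plus // rvec_short //.
have -> : (j == n.+1) = false by apply/negbTE; lia.
rewrite /=. ring.
Qed.

Lemma down_count (P : nat -> bool) N :
  (forall p, p.+1 < N -> P p.+1 -> P p) ->
  forall p, p < N -> P p = (p < count P (iota 0 N)).
Proof.
elim: N => [//|N IH] hd p hp.
have -> : iota 0 N.+1 = iota 0 N ++ [:: N] by rewrite -addn1 iotaD.
rewrite count_cat /= addn0.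
have IH' := IH (fun q hq => hd q (ltnW hq)).
have hc : count P (iota 0 N) <= N by rewrite -[X in _ <= X](size_iota 0 N) count_size.
case hN: (P N).
- have allP : forall d q, q + d = N -> P q.
    elim=> [|d IHd] q hq; first by rewrite addn0 in hq; subst q.
    apply: hd; first lia.
    by apply: IHd; lia.
  have -> : count P (iota 0 N) = N.
    rewrite (@eq_in_count _ _ predT); first by rewrite count_predT size_iota.
    move=> x; rewrite mem_iota => /andP [_ hx]; apply: (allP (N - x)); lia.
  rewrite (allP (N - p)) //; lia.
- rewrite addn0.
  case: (ltngtP p N) => hpN; first by apply: IH'.
  + lia.
  + by rewrite hpN hN; apply/esym; apply/negbTE; rewrite -leqNgt.
Qed.

Lemma card_ord_pred (N : nat) (P : pred nat) :
  #|[set p : 'I_N | P p]| = count P (iota 0 N).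
Proof.
rewrite cardsE cardE /enum_mem size_filter -enumT -val_enum_ord count_map.
by apply: eq_count => x.
Qed.

Lemma card_param (T : finType) (A : {set T}) (f : nat -> T) (P : pred nat) N :
  (forall p q, p < N -> q < N -> f p = f q -> p = q) ->
  (forall r, r \in A <-> exists p, [/\ p < N, r = f p & P p]) ->
  #|A| = count P (iota 0 N).
Proof.
move=> hinj hA.
have -> : A = [set f (nat_of_ord p) | p : 'I_N in [set p : 'I_N | P p]].
  apply/setP => r; apply/idP/imsetP.
  - move/hA => [p [hp -> hP]]; exists (Ordinal hp) => //; by rewrite inE.
  - move=> [p]; rewrite inE => hP ->; apply/hA; exists (nat_of_ord p); split => //.
rewrite card_in_imset ?card_ord_pred // => p q _ _ /hinj h.
by apply: val_inj; apply: h.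
Qed.

Definition root_at n k (a p : nat) : broot n :=
  if p < n - k then rminus (inord a) (inord (k.+1 + p))
  else if p == n - k then rshort (inord a)
  else rplus (inord a) (inord (n + (n - k) + 1 - p)).

Definition col_at n k (i t : nat) : broot n :=
  rplus (inord (k - i - t)) (inord (k.+1 - i)).

Lemma inord_eq n (x y : nat) : x <= n -> y <= n ->
  (inord x : 'I_n.+1) = inord y -> x = y.
Proof. by move=> hx hy /(congr1 (@nat_of_ord _)); rewrite !inordK. Qed.

Definition pos n k (r : broot n) : nat :=
  match r with
  | inl (inl (a, b)) => n + (n - k) + 1 - b
  | inl (inr (a, b)) => b - k.+1
  | inr _ => n - k
  end.

Lemma pos_root_at n k a p : k < n -> p <= 2 * (n - k) -> pos n k (root_at n k a p) = p.
Proof.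
move=> hk hp; rewrite /root_at.
case: ifP => h1; last case: ifP => h2; rewrite /= ?inordK; lia.
Qed.

Lemma root_at_inj n k a p q : k < n -> p <= 2 * (n - k) -> q <= 2 * (n - k) ->
  root_at n k a p = root_at n k a q -> p = q.
Proof.
move=> hk hp hq e.
by rewrite -(@pos_root_at n k a p hk hp) e pos_root_at.
Qed.

Lemma root_at_row n k i p : 0 < i <= k -> k < n -> p <= 2 * (n - k) ->
  base_row k i (root_at n k (k.+1 - i) p) /\ base_region k (root_at n k (k.+1 - i) p).
Proof.
move=> hi hk hp; rewrite /root_at.
case: ifP => h1; last case: ifP => h2; rewrite /= ?inordK; lia.
Qed.

Ltac ordfacts :=
  repeat match goal with
  | x : 'I_(_) |- _ => have := ltn_ord x; move: x => x /=
  end.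

Lemma row_surj n k i (r : broot n) : 0 < i <= k -> k < n -> base_row k i r ->
  exists p, p <= 2 * (n - k) /\ r = root_at n k (k.+1 - i) p.
Proof.
move=> hi hk; case: r => [[[a b]|[a b]]|a] /=.
- move=> /andP [/eqP ha hb]; have := ltn_ord a; have := ltn_ord b => hb' ha'.
  exists (n + (n - k) + 1 - b); split; first lia.
  rewrite /root_at ifF; last by apply/negbTE; lia.
  rewrite ifF; last by apply/negbTE; lia.
  rewrite /rplus; congr (inl (inl (_, _))); apply: val_inj; rewrite /= inordK; lia.
- move=> /andP [/eqP ha hb]; have := ltn_ord a; have := ltn_ord b => hb' ha'.
  exists (b - k.+1); split; first lia.
  rewrite /root_at ifT; last lia.
  rewrite /rminus; congr (inl (inr (_, _))); apply: val_inj; rewrite /= inordK; lia.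
- move=> /eqP ha; have := ltn_ord a => ha'.
  exists (n - k); split; first lia.
  rewrite /root_at ifF; last by apply/negbTE; lia.
  rewrite eqxx /rshort; congr (inr _); apply: val_inj; rewrite /= inordK; lia.
Qed.

Lemma region_row n k (r : broot n) : base_region k r ->
  exists i, 0 < i <= k /\ base_row k i r.
Proof.
case: r => [[[a b]|[a b]]|a] /= h; exists (k.+1 - a); split; lia.
Qed.

Lemma col_prop n k i t : 0 < i <= k -> k <= n -> t < k - i ->
  top_col k i (col_at n k i t) /\ top_region k (col_at n k i t).
Proof. move=> hi hk ht; rewrite /col_at /= !inordK; lia. Qed.

Lemma col_inj n k i t t' : k <= n -> t < k - i -> t' < k - i ->
  col_at n k i t = col_at n k i t' -> t = t'.
Proof. move=> hk ht ht' [] e; have := @inord_eq n _ _ _ _ e; lia. Qed.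

Lemma col_surj n k i (r : broot n) : 0 < i <= k -> k <= n -> top_col k i r ->
  exists t, t < k - i /\ r = col_at n k i t.
Proof.
move=> hi hk; case: r => [[[a b]|[a b]]|a] //=.
move=> /andP [/andP [ha /eqP hb] hab]; have := ltn_ord a; have := ltn_ord b => hb' ha'.
exists (k - i - a); split; first lia.
rewrite /col_at /rplus; congr (inl (inl (_, _))); apply: val_inj; rewrite /= inordK; lia.
Qed.

Lemma region_col n k (r : broot n) : top_region k r ->
  exists i, 0 < i <= k /\ top_col k i r.
Proof.
case: r => [[[a b]|[a b]]|a] //= h; exists (k.+1 - b); split; lia.
Qed.

Lemma lambda1_count n k (S : {set broot n}) i : 0 < i <= k -> k < n ->
  lambda1 k S i = count (fun p => root_at n k (k.+1 - i) p \in S) (iota 0 (2 * (n - k)).+1).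
Proof.
move=> hi hk; apply: (@card_param _ _ (fun p => root_at n k (k.+1 - i) p)).
  move=> p q hp hq; apply: root_at_inj => //; lia.
move=> r; rewrite inE; split.
- move=> /andP [hS hr]; have [p [hp e]] := @row_surj n k i r hi hk hr.
  by exists p; split => //; rewrite -e.
- move=> [p [hp -> h]]; rewrite h /=; by case: (@root_at_row n k i p hi hk hp).
Qed.

Lemma lambda2_count n k (S : {set broot n}) i : 0 < i <= k -> k < n ->
  lambda2 k S i = count (fun t => col_at n k i t \in S) (iota 0 (k - i)).
Proof.
move=> hi hk; apply: (@card_param _ _ (fun t => col_at n k i t)).
  move=> p q hp hq; apply: col_inj => //; lia.
move=> r; rewrite inE; split.
- move=> /andP [hS hr]; have [t [ht e]] := @col_surj n k i r hi (ltnW hk) hr.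
  by exists t; split => //; rewrite -e.
- move=> [t [ht -> h]]; rewrite h /=; by case: (@col_prop n k i t hi (ltnW hk) ht).
Qed.

Lemma row_down n k (S : {set broot n}) i p : is_OG_diagram k S -> 0 < i <= k -> k < n ->
  p.+1 <= 2 * (n - k) ->
  root_at n k (k.+1 - i) p.+1 \in S -> root_at n k (k.+1 - i) p \in S.
Proof.
move=> [_ hb _ _] hi hk hp hin; apply: (hb _ _ _ _ hin).
- by case: (@root_at_row n k i p hi hk (ltnW hp)).
- by case: (@root_at_row n k i p.+1 hi hk hp).
rewrite /root_at; case: ifP => h1; case: ifP => h2; try case: ifP => h3; try case: ifP => h4;
  try (exfalso; lia);
  first [apply: rle_minus_b | apply: rle_minus_short | apply: rle_short_plus | apply: rle_plus_b];
  lia.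
Qed.

Lemma row_cross n k (S : {set broot n}) i p : is_OG_diagram k S -> 0 < i -> i < k -> k < n ->
  p <= 2 * (n - k) ->
  root_at n k (k.+1 - i.+1) p \in S -> root_at n k (k.+1 - i) p \in S.
Proof.
move=> [_ hb _ _] hi hik hk hp hin; apply: (hb _ _ _ _ hin).
- have hi' : 0 < i <= k by lia. by case: (@root_at_row n k i p hi' hk hp).
- have hi' : 0 < i.+1 <= k by lia. by case: (@root_at_row n k i.+1 p hi' hk hp).
rewrite /root_at; case: ifP => h1; try case: ifP => h2;
  first [apply: rle_minus_a | apply: rle_short_a | apply: rle_plus_a]; lia.
Qed.

Lemma col_down n k (S : {set broot n}) i t : is_OG_diagram k S -> 0 < i <= k -> k < n ->
  t.+1 < k - i -> col_at n k i t.+1 \in S -> col_at n k i t \in S.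
Proof.
move=> [_ _ ht _] hi hk htt hin; apply: (ht _ _ _ _ hin).
- by case: (@col_prop n k i t hi (ltnW hk) (ltnW htt)).
- by case: (@col_prop n k i t.+1 hi (ltnW hk) htt).
rewrite /col_at; apply: rle_plus_a; lia.
Qed.

Lemma col_cross n k (S : {set broot n}) i t : is_OG_diagram k S -> 0 < i -> i < k -> k < n ->
  t.+1 < k - i -> col_at n k i.+1 t \in S -> col_at n k i t.+1 \in S.
Proof.
move=> [_ _ ht _] hi hik hk htt hin; apply: (ht _ _ _ _ hin).
- have hi' : 0 < i <= k by lia. by case: (@col_prop n k i t.+1 hi' (ltnW hk) htt).
- have hi' : 0 < i.+1 <= k by lia. have htt' : t < k - i.+1 by lia.
  by case: (@col_prop n k i.+1 t hi' (ltnW hk) htt').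
rewrite /col_at (_ : k - i.+1 - t = k - i - t.+1); last lia.
apply: rle_plus_b; lia.
Qed.

Lemma force_col n k (S : {set broot n}) i t : is_OG_diagram k S -> 0 < i <= k -> k < n ->
  t < k - i ->
  ((2 * (n - k) + 1 < lambda1 k S (i + 1 + t) + lambda1 k S i) -> col_at n k i t \in S) /\
  ((lambda1 k S (i + 1 + t) + lambda1 k S i < 2 * (n - k) + 1) -> col_at n k i t \notin S).
Proof.
move=> [_ _ _ hf] hi hk ht.
have ha : 1 <= (inord (k - i - t) : 'I_n.+1) by rewrite inordK; lia.
have hab : (inord (k - i - t) : 'I_n.+1) < (inord (k.+1 - i) : 'I_n.+1) by rewrite !inordK; lia.
have hb : (inord (k.+1 - i) : 'I_n.+1) <= k by rewrite inordK; lia.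
have := hf _ _ ha hab hb; rewrite /= !inordK; try lia.
rewrite (_ : k.+1 - (k - i - t) = i + 1 + t); last lia.
rewrite (_ : k.+1 - (k.+1 - i) = i); last lia.
rewrite (_ : 2 * n + 1 - 2 * k = 2 * (n - k) + 1); last lia.
by [].
Qed.

Lemma sub_count_in (T : eqType) (P Q : pred T) (s : seq T) :
  (forall x, x \in s -> P x -> Q x) -> count P s <= count Q s.
Proof.
elim: s => [//|x s IH] h /=.
apply: leq_add; last by apply: IH => y hy; apply: h; rewrite inE hy orbT.
case hP: (P x) => //=; by rewrite (h x) // inE eqxx.
Qed.

Lemma row_char n k (S : {set broot n}) i p : is_OG_diagram k S -> 0 < i <= k -> k < n ->
  p <= 2 * (n - k) -> (root_at n k (k.+1 - i) p \in S) = (p < lambda1 k S i).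
Proof.
move=> hD hi hk hp; rewrite (lambda1_count _ _ S _ hi hk).
apply: (@down_count (fun p => root_at n k (k.+1 - i) p \in S)) => //.
by move=> q hq; apply: row_down.
Qed.

Lemma col_char n k (S : {set broot n}) i t : is_OG_diagram k S -> 0 < i <= k -> k < n ->
  t < k - i -> (col_at n k i t \in S) = (t < lambda2 k S i).
Proof.
move=> hD hi hk ht; rewrite (lambda2_count _ _ S _ hi hk).
apply: (@down_count (fun t => col_at n k i t \in S)) => //.
by move=> q hq; apply: col_down.
Qed.

Lemma F1 n k (S : {set broot n}) i : 0 < i <= k -> k < n -> lambda1 k S i <= 2 * (n - k) + 1.
Proof.
move=> hi hk; rewrite (lambda1_count _ _ S _ hi hk) addn1.
by rewrite -[X in _ <= X](size_iota 0 (2 * (n - k)).+1) count_size.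
Qed.

Lemma F2 n k (S : {set broot n}) i : 0 < i <= k -> k < n -> lambda2 k S i <= k - i.
Proof.
move=> hi hk; rewrite (lambda2_count _ _ S _ hi hk).
by rewrite -[X in _ <= X](size_iota 0 (k - i)) count_size.
Qed.

Lemma F3 n k (S : {set broot n}) i : is_OG_diagram k S -> 0 < i -> i < k -> k < n ->
  lambda1 k S i.+1 <= lambda1 k S i.
Proof.
move=> hD hi hik hk.
have hi1 : 0 < i <= k by lia.
have hi2 : 0 < i.+1 <= k by lia.
rewrite (lambda1_count _ _ S _ hi1 hk) (lambda1_count _ _ S _ hi2 hk).
apply: sub_count_in => p; rewrite mem_iota => hp; apply: row_cross => //; lia.
Qed.

Lemma F4 n k (S : {set broot n}) i : is_OG_diagram k S -> 0 < i -> i < k -> k < n ->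
  lambda2 k S i.+1 <= lambda2 k S i /\
  (0 < lambda2 k S i.+1 -> lambda2 k S i.+1 < lambda2 k S i).
Proof.
move=> hD hi hik hk.
have hi1 : 0 < i <= k by lia.
have hi2 : 0 < i.+1 <= k by lia.
have hN : k - i = (k - i.+1).+1 by lia.
have e1 : lambda2 k S i = (col_at n k i 0 \in S) +
    count (fun t => col_at n k i t.+1 \in S) (iota 0 (k - i.+1)).
  rewrite (lambda2_count _ _ S _ hi1 hk) hN /= (iotaDl 1 0) count_map.
  by congr (_ + _); apply: eq_count => t; rewrite /= add1n.
have hle : lambda2 k S i.+1 <= count (fun t => col_at n k i t.+1 \in S) (iota 0 (k - i.+1)).
  rewrite (lambda2_count _ _ S _ hi2 hk).
  apply: sub_count_in => t; rewrite mem_iota => ht; apply: col_cross => //; lia.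
split; first by rewrite e1; apply: (leq_trans hle); apply: leq_addl.
move=> hpos.
have hN0 : 0 < k - i.+1.
  move: hpos; rewrite (lambda2_count _ _ S _ hi2 hk); case: (k - i.+1) => //.
have h0 : col_at n k i.+1 0 \in S by rewrite (col_char _ _ _ _ _ hD hi2 hk hN0).
have h1 : col_at n k i 1 \in S by apply: col_cross => //; lia.
have h0' : col_at n k i 0 \in S by apply: col_down => //; lia.
rewrite e1 h0' /= add1n ltnS //.
Qed.

Lemma F5 n k (S : {set broot n}) i : is_OG_diagram k S -> 0 < i -> i < k -> k < n ->
  2 * (n - k) + 1 < lambda1 k S i.+1 + lambda1 k S i -> 0 < lambda2 k S i.
Proof.
move=> hD hi hik hk h.
have hi1 : 0 < i <= k by lia.
have ht : 0 < k - i by lia.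
have [hin _] := force_col _ _ _ _ _ hD hi1 hk ht.
rewrite addn0 addn1 in hin.
rewrite addn1 in hin; rewrite -(col_char _ _ _ _ _ hD hi1 hk ht); apply: hin; rewrite -addn1; exact: h.
Qed.

Lemma sorted_map_iota (f : nat -> nat) N s :
  (forall i, s <= i -> i.+1 < s + N -> f i.+1 <= f i) -> sorted geq [seq f i | i <- iota s N].
Proof.
elim: N s => [//|N IH] s h.
case: N IH h => [//|N] IH h.
have hs : sorted geq [seq f i | i <- iota s.+1 N.+1].
  by apply: IH => i h1 h2; apply: h; lia.
move: hs; rewrite /= => ->; rewrite andbT; apply: h => //; lia.
Qed.

Lemma nth_fk n k (S : {set broot n}) i : i < k ->
  nth 0 (fk k S) i = lambda1 k S i.+1 + lambda2 k S i.+1.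
Proof. by move=> hi; rewrite /fk (nth_map 0) ?size_iota // nth_iota // add1n. Qed.

Lemma part1 n k (S : {set broot n}) : 0 < k -> k < n -> is_OG_diagram k S -> in_P n k (fk k S).
Proof.
move=> hk0 hk hD; split.
- by rewrite size_map size_iota.
- apply: sorted_map_iota => i h1 h2.
  have h3 : i < k by lia.
  have := F3 _ _ _ _ hD h1 h3 hk. have [] := F4 _ _ _ _ hD h1 h3 hk. lia.
- rewrite nth_fk //.
  have hi1 : 0 < 1 <= k by lia.
  have := F1 _ _ S _ hi1 hk; have := F2 _ _ S _ hi1 hk; lia.
- move=> i hi; rewrite !nth_fk //; try lia.
  have h1 : 0 < i.+1 by [].
  have := F3 _ _ _ _ hD h1 hi hk; have [] := F4 _ _ _ _ hD h1 hi hk; have := F5 _ _ _ _ hD h1 hi hk.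
  lia.
Qed.

Lemma key n k (S T : {set broot n}) i : is_OG_diagram k S -> is_OG_diagram k T ->
  0 < i <= k -> k < n ->
  (forall i', i < i' <= k -> lambda1 k S i' = lambda1 k T i') ->
  lambda1 k S i + lambda2 k S i = lambda1 k T i + lambda2 k T i ->
  lambda1 k S i <= lambda1 k T i.
Proof.
move=> hS hT hi hk heq hsum; rewrite leqNgt; apply/negP => hlt.
have hle : lambda2 k T i <= lambda2 k S i.
  rewrite (lambda2_count _ _ T _ hi hk) (lambda2_count _ _ S _ hi hk).
  apply: sub_count_in => t; rewrite mem_iota => /andP [_ ht] hin; rewrite add0n in ht.
  have [_ hout] := force_col _ _ _ _ _ hT hi hk ht.
  have [hinS _] := force_col _ _ _ _ _ hS hi hk ht.
  have e := heq (i + 1 + t) ltac:(lia).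
  apply: hinS.
  case: (ltnP (lambda1 k T (i + 1 + t) + lambda1 k T i) (2 * (n - k) + 1)) => h.
    by move: (hout h); rewrite hin.
  lia.
lia.
Qed.

Lemma L1_eq n k (S T : {set broot n}) : is_OG_diagram k S -> is_OG_diagram k T -> k < n ->
  (forall i, 0 < i <= k -> lambda1 k S i + lambda2 k S i = lambda1 k T i + lambda2 k T i) ->
  forall d i, 0 < i <= k -> k - i < d -> lambda1 k S i = lambda1 k T i.
Proof.
move=> hS hT hk hsum; elim=> [//|d IH] i hi hd.
have hup : forall i', i < i' <= k -> lambda1 k S i' = lambda1 k T i'.
  move=> i' hi'; apply: IH; lia.
apply/eqP; rewrite eqn_leq; apply/andP; split.
- by apply: key => //; apply: hsum.
- apply: key => //; last by rewrite hsum.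
  by move=> i' hi'; rewrite hup.
Qed.

Lemma part2 n k (S T : {set broot n}) : 0 < k -> k < n ->
  is_OG_diagram k S -> is_OG_diagram k T -> fk k S = fk k T -> S = T.
Proof.
move=> hk0 hk hS hT hfk.
have hsum : forall i, 0 < i <= k ->
    lambda1 k S i + lambda2 k S i = lambda1 k T i + lambda2 k T i.
  move=> i hi; have := congr1 (fun g => nth 0 g i.-1) hfk.
  rewrite /= !nth_fk; try lia.
  by rewrite prednK //; lia.
have h1 : forall i, 0 < i <= k -> lambda1 k S i = lambda1 k T i.
  move=> i hi; apply: (@L1_eq n k S T hS hT hk hsum k) => //; lia.
have h2 : forall i, 0 < i <= k -> lambda2 k S i = lambda2 k T i.
  move=> i hi; have := hsum i hi; rewrite h1 //; lia.
apply/setP => r.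
case: (boolP (base_region k r)) => hb.
  have [i [hi hrow]] := region_row _ _ _ hb.
  have [p [hp ->]] := row_surj _ _ _ _ hi hk hrow.
  by rewrite (row_char _ _ _ _ _ hS) // (row_char _ _ _ _ _ hT) // h1.
case: (boolP (top_region k r)) => ht.
  have [i [hi hcol]] := region_col _ _ _ ht.
  have [t [htt ->]] := col_surj _ _ _ _ hi (ltnW hk) hcol.
  by rewrite (col_char _ _ _ _ _ hS) // (col_char _ _ _ _ _ hT) // h2.
case: hS => hregS _ _ _; case: hT => hregT _ _ _.
have nS : r \notin S by apply/negP => /hregS; rewrite (negbTE hb) (negbTE ht).
have nT : r \notin T by apply/negP => /hregT; rewrite (negbTE hb) (negbTE ht).
by rewrite (negbTE nS) (negbTE nT).
Qed.

Theorem lemma3p8 (n k : nat) (hk : (1 <= k)%N) (hkn : (k < n)%N) :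
  (forall S : {set broot n}, is_OG_diagram k S -> in_P n k (fk k S)) /\
  (forall S T : {set broot n}, is_OG_diagram k S -> is_OG_diagram k T ->
     fk k S = fk k T -> S = T).
Proof.
split.
- by move=> S hS; apply: part1.
- by move=> S T hS hT; apply: part2.
Qed.
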